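(* If $G$ is a $t$-clique-sum of graphs $G_1$ and $G_2$ and $r\in\mathbb{N}$, then $\xi_{[r]}(G)=\max\{\xi_{[r]}(G_1),\xi_{[r]}(G_2)\}$.
   Context: A $t$-clique-sum of $G_1$ and $G_2$ is the graph $G=G_1\cup G_2$ (vertex and edge sets the unions) where $G_1$ and $G_2$ intersect exactly in a complete graph $K_t$ (i.e. $V(G_1)\cap V(G_2)$ has $t$ vertices, pairwise adjacent in both, and $G_1,G_2$ are induced subgraphs of $G$). A $(d;r)$ orthogonal subspace representation of $G$ is a family $\{S_u\}_{u\in V(G)}$ of $r$-dimensional subspaces of $\mathbb{C}^d$ with $S_u\perp S_v$ whenever $uv\in E(G)$; $\xi_{[r]}(G)$ is the least $d$ for which one exists. *)

(* Defs.v *)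
From HB Require Import structures.
From mathcomp Require Import all_boot all_order all_algebra.
From Stdlib Require Import ClassicalEpsilon.
Set Implicit Arguments. Unset Strict Implicit. Unset Printing Implicit Defensive.
Import Order.TTheory GRing.Theory Num.Theory.
Local Open Scope ring_scope.

Definition simple_graph (V : finType) (e : rel V) : Prop :=
  symmetric e /\ irreflexive e.

Definition mx_orth (C : numClosedFieldType) (r d : nat) (A B : 'M[C]_(r, d)) : Prop :=
  A *m (map_mx (@Num.conj C) B)^T = 0.

(* (d;r) orthogonal subspace representation: each vertex u gets an
   r-dimensional subspace S_u of C^d (the row space of a rank-r r x d
   matrix), with S_u ⟂ S_v for every edge uv. *)
Definition orth_subspace_rep (C : numClosedFieldType) (V : finType) (e : rel V)
    (d r : nat) : Prop :=
  exists S : V -> 'M[C]_(r, d),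
    (forall u, \rank (S u) = r) /\
    (forall u v, e u v -> mx_orth (S u) (S v)).

Definition xi_r (C : numClosedFieldType) (V : finType) (e : rel V) (r : nat) : nat :=
  epsilon (inhabits 0%N)
    (fun d => orth_subspace_rep C e d r /\
              forall d', orth_subspace_rep C e d' r -> (d <= d')%N).

Definition induced (T : finType) (e : rel T) (A : {set T}) : rel {x : T | x \in A} :=
  fun x y => e (val x) (val y).
Arguments induced {T} e A.

Definition clique_sum (T : finType) (e : rel T) (V1 V2 : {set T}) (t : nat) : Prop :=
  V1 :|: V2 = setT /\
  #|V1 :&: V2| = t /\
  (forall x y, x \in V1 :&: V2 -> y \in V1 :&: V2 -> x != y -> e x y) /\
  (forall x y, e x y -> (x \in V1) && (y \in V1) || (x \in V2) && (y \in V2)).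

(* Main.v *)
Require Import Defs.
From HB Require Import structures.
From mathcomp Require Import all_boot all_order all_algebra.
From mathcomp Require Import sesquilinear spectral.
From Stdlib Require Import ClassicalEpsilon.
Set Implicit Arguments. Unset Strict Implicit. Unset Printing Implicit Defensive.
Import Order.TTheory GRing.Theory Num.Theory.
Local Open Scope ring_scope.
Local Open Scope sesquilinear_scope.
Section G.
Variable C : numClosedFieldType.
Local Notation Oc B := (orthomx Num.Def.conjC (hermitian1mx _) B).
Lemma adjM m n p (A : 'M[C]_(m,n)) (B : 'M[C]_(n,p)) : (A *m B)^t* = B^t* *m A^t*.
Proof. by rewrite trmx_mul map_mxM. Qed.

Lemma adjD m n (A B : 'M[C]_(m,n)) : (A + B)^t* = A^t* + B^t*.
Proof. by rewrite linearD map_mxD. Qed.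

Lemma adj0 m n : (0 : 'M[C]_(m,n))^t* = 0.
Proof. by rewrite trmx0 map_mx0. Qed.

Lemma adj_sum m n (I : finType) (P : pred I) (F : I -> 'M[C]_(m,n)) :
  (\sum_(i | P i) F i)^t* = \sum_(i | P i) (F i)^t*.
Proof. by rewrite linear_sum map_mx_sum. Qed.

Lemma orth_sym m p n (A : 'M[C]_(m,n)) (B : 'M[C]_(p,n)) :
  A *m B^t* = 0 -> B *m A^t* = 0.
Proof. by move=> h; rewrite -[B]trmxCK -adjM h adj0. Qed.

Lemma orth_sub m m' p p' n (A : 'M[C]_(m,n)) (A' : 'M[C]_(m',n))
   (B : 'M[C]_(p,n)) (B' : 'M[C]_(p',n)) :
  (A <= A')%MS -> (B <= B')%MS -> A' *m B'^t* = 0 -> A *m B^t* = 0.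
Proof.
move=> /submxP[D ->] /submxP[E ->] h.
by rewrite adjM mulmxA -(mulmxA D) h mulmx0 mul0mx.
Qed.

Lemma unit_basis m d k (W : 'M[C]_(m,d)) : \rank W = k ->
  exists P : 'M[C]_(k,d), P \is unitarymx /\ (P <= W)%MS /\ (W <= P)%MS.
Proof.
move=> <-; exists (schmidt (row_base W)); split.
  by apply: schmidt_unitarymx; rewrite rank_leq_col.
have e := eqmx_schmidt_free (row_base_free W).
by rewrite !e !eq_row_base !submx_refl.
Qed.


Lemma transfer (T : finType) (K : {set T}) r p d (B B' : T -> 'M[C]_(r,d))
  (Q : 'M[C]_(p,d)) :
  (forall v, v \in K -> Q *m (B v)^t* = 0) ->
  Q *m (\sum_(v in K) (B v)^t* *m B' v) = 0.
Proof.
move=> h; rewrite mulmx_sumr big1 // => v vK.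
by rewrite mulmxA h ?mul0mx.
Qed.

Lemma transfer1 (T : finType) (K : {set T}) r d (B B' : T -> 'M[C]_(r,d)) u :
  u \in K ->
  (forall v, v \in K -> B u *m (B v)^t* = if u == v then 1%:M else 0) ->
  B u *m (\sum_(v in K) (B v)^t* *m B' v) = B' u.
Proof.
move=> uK h; rewrite mulmx_sumr (bigD1 u) //= big1 ?addr0.
  by rewrite mulmxA h // eqxx mul1mx.
move=> v /andP[vK nvu]; by rewrite mulmxA h // eq_sym (negbTE nvu) mul0mx.
Qed.

Lemma core (T : finType) (K : {set T}) r d (S1 S2 : T -> 'M[C]_(r,d)) :
  (forall u, u \in K -> \rank (S1 u) = r) ->
  (forall u, u \in K -> \rank (S2 u) = r) ->
  (forall u v, u \in K -> v \in K -> u != v -> S1 u *m (S1 v)^t* = 0) ->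
  (forall u v, u \in K -> v \in K -> u != v -> S2 u *m (S2 v)^t* = 0) ->
  exists U : 'M[C]_d, U *m U^t* = 1%:M /\
    forall u, u \in K -> (S1 u <= S2 u *m U)%MS.
Proof.
move=> rk1 rk2 o1 o2.
pose B1 u := schmidt (S1 u); pose B2 u := schmidt (S2 u).
have Bprop : forall S : T -> 'M[C]_(r,d),
    (forall u, u \in K -> \rank (S u) = r) ->
    (forall u v, u \in K -> v \in K -> u != v -> S u *m (S v)^t* = 0) ->
    forall u, u \in K -> [/\ (S u <= schmidt (S u))%MS, (schmidt (S u) <= S u)%MS &
      forall v, v \in K -> schmidt (S u) *m (schmidt (S v))^t* =
           if u == v then 1%:M else 0].
  move=> S rk o u uK; have fr : forall w, w \in K -> row_free (S w).
    by move=> w wK; rewrite /row_free rk.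
  have e := eqmx_schmidt_free (fr u uK).
  split; [by rewrite schmidt_sub | by rewrite e submx_refl|].
  move=> v vK; case: eqP => [<-|/eqP nuv].
    by apply/unitarymxP/schmidt_unitarymx; rewrite -(rk u uK) rank_leq_col.
  have e' := eqmx_schmidt_free (fr v vK).
  by apply: (orth_sub _ _ (o u v uK vK nuv)); rewrite ?e ?e' submx_refl.
have H1 := Bprop S1 rk1 o1; have H2 := Bprop S2 rk2 o2.
rewrite -/B1 -/B2 in H1 H2.
pose V := \sum_(v in K) (B2 v)^t* *m B1 v.
pose V' := \sum_(v in K) (B1 v)^t* *m B2 v.
have B2V : forall u, u \in K -> B2 u *m V = B1 u.
  by move=> u uK; apply: transfer1 => //; case: (H2 u uK).
have B1V' : forall u, u \in K -> B1 u *m V' = B2 u.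
  by move=> u uK; apply: transfer1 => //; case: (H1 u uK).
have adjV : V^t* = V'.
  by rewrite /V adj_sum; apply: eq_bigr => v _; rewrite adjM trmxCK.
pose W1 := (\sum_(u in K) <<S1 u>>)%MS.
pose W2 := (\sum_(u in K) <<S2 u>>)%MS.
have B1W1 : forall u, u \in K -> (B1 u <= W1)%MS.
  move=> u uK; apply: (sumsmx_sup u) => //; rewrite genmxE; by case: (H1 u uK).
have B2W2 : forall u, u \in K -> (B2 u <= W2)%MS.
  move=> u uK; apply: (sumsmx_sup u) => //; rewrite genmxE; by case: (H2 u uK).
have rkW : \rank W1 = \rank W2.
  apply/eqP; rewrite eqn_leq; apply/andP; split.
    apply: leq_trans (mxrankM_maxl W2 V); apply: mxrankS.
    apply/sumsmx_subP => u uK; rewrite genmxE.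
    case: (H1 u uK) => s1 _ _; apply: (submx_trans s1).
    change (B1 u <= W2 *m V)%MS.
    by rewrite -B2V // submxMr // B2W2.
  apply: leq_trans (mxrankM_maxl W1 V'); apply: mxrankS.
  apply/sumsmx_subP => u uK; rewrite genmxE.
  case: (H2 u uK) => s2 _ _; apply: (submx_trans s2).
  change (B2 u <= W1 *m V')%MS.
  by rewrite -B1V' // submxMr // B1W1.
have rkO : \rank (Oc W1) = \rank (Oc W2) by rewrite !rank_ortho rkW.
have [P1 [P1u [P1s P1s']]] := unit_basis rkO.
have [P2 [P2u [P2s P2s']]] := unit_basis (erefl (\rank (Oc W2))).
have P1B1 : forall u, u \in K -> P1 *m (B1 u)^t* = 0.
  move=> u uK; apply: (orth_sub (submx_refl P1) (B1W1 u uK)).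
  by apply/orthomx1P.
have P2B2 : forall u, u \in K -> P2 *m (B2 u)^t* = 0.
  move=> u uK; apply: (orth_sub (submx_refl P2) (B2W2 u uK)).
  by apply/orthomx1P.
pose U := V + P2^t* *m P1.
have adjU : U^t* = V' + P1^t* *m P2 by rewrite adjD adjV adjM trmxCK.
have B2U : forall u, u \in K -> B2 u *m U = B1 u.
  move=> u uK; rewrite mulmxDr B2V // mulmxA (orth_sym (P2B2 u uK)).
  by rewrite mul0mx addr0.
have B1U' : forall u, u \in K -> B1 u *m U^t* = B2 u.
  move=> u uK; rewrite adjU mulmxDr B1V' // mulmxA (orth_sym (P1B1 u uK)).
  by rewrite mul0mx addr0.
have P2U : P2 *m U = P1.
  rewrite mulmxDr transfer // add0r mulmxA (unitarymxP P2u) mul1mx //.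
have P1U' : P1 *m U^t* = P2.
  rewrite adjU mulmxDr transfer // add0r mulmxA (unitarymxP P1u) mul1mx //.
exists U; split; last first.
  move=> u uK; case: (H1 u uK) => s1 _ _; apply: (submx_trans s1).
  change (B1 u <= S2 u *m U)%MS.
  by rewrite -B2U // submxMr //; case: (H2 u uK).
apply/eqP; rewrite -subr_eq0; apply/eqP.
set N := _ - _.
suff : (1%:M <= kermx N)%MS by move/sub_kermxP; rewrite mul1mx.
have k2 : forall u, u \in K -> (B2 u <= kermx N)%MS.
  move=> u uK; apply/sub_kermxP.
  by rewrite /N mulmxBr mulmxA B2U // B1U' // mulmx1 subrr.
have kP : (P2 <= kermx N)%MS.
  by apply/sub_kermxP; rewrite /N mulmxBr mulmxA P2U P1U' mulmx1 subrr.
have /eqmxP/andP[_ h] := addsmx_ortho W2.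
apply: (submx_trans h); rewrite addsmx_sub; apply/andP; split.
  apply/sumsmx_subP => u uK; rewrite genmxE.
  case: (H2 u uK) => s2 _ _; exact: submx_trans s2 (k2 u uK).
exact: submx_trans P2s' kP.
Qed.

Lemma mx_orthE r d (A B : 'M[C]_(r,d)) : mx_orth A B <-> A *m B ^t* = 0.
Proof. by rewrite /mx_orth map_trmx. Qed.

Lemma rep_exists (T : finType) (e : rel T) r : irreflexive e ->
  exists d, orth_subspace_rep C e d r.
Proof.
move=> irr; exists #|{: 'I_r * T}|.
pose S (u : T) : 'M[C]_(r, #|{: 'I_r * T}|) :=
  \matrix_(i, j) ((j == enum_rank (i, u))%:R).
have SS : forall u v, S u *m (S v)^t* = \matrix_(i, i') ((enum_rank (i, u) == enum_rank (i', v))%:R).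
  move=> u v; apply/matrixP => i i'; rewrite !mxE.
  rewrite (bigD1 (enum_rank (i, u))) //= big1.
    by rewrite !mxE eqxx mul1r addr0 conjC_nat.
  by move=> j nj; rewrite !mxE (negbTE nj) mul0r.
exists S; split.
  move=> u; apply: mxrank_unitary; apply/unitarymxP; rewrite SS.
  by apply/matrixP => i i'; rewrite !mxE (inj_eq enum_rank_inj) xpair_eqE eqxx andbT.
move=> u v euv; apply/mx_orthE; rewrite SS.
apply/matrixP => i i'; rewrite !mxE (inj_eq enum_rank_inj) xpair_eqE.
have -> : (u == v) = false by apply/negbTE/eqP => h; move: euv; rewrite h irr.
by rewrite andbF.
Qed.


Lemma rep_pad (T : finType) (e : rel T) r d d' :
  orth_subspace_rep C e d r -> (d <= d')%N -> orth_subspace_rep C e d' r.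
Proof.
move=> [S [rk o]] le; rewrite -(subnKC le).
exists (fun u => row_mx (S u) (0 : 'M[C]_(r, d' - d))); split.
  by move=> u; rewrite rank_row_mx0 rk.
move=> u v euv; apply/mx_orthE.
rewrite tr_row_mx map_col_mx mul_row_col trmx0 map_mx0 mulmx0 addr0.
by apply/mx_orthE/o.
Qed.

Lemma rep_induced (T : finType) (e : rel T) (A : {set T}) r d :
  orth_subspace_rep C e d r -> orth_subspace_rep C (induced e A) d r.
Proof.
move=> [S [rk o]]; exists (fun x => S (val x)); split => // x y.
exact: o.
Qed.

Lemma rep_ext (T : finType) (e : rel T) (A : {set T}) r d :
  orth_subspace_rep C (induced e A) d r ->
  exists S : T -> 'M[C]_(r,d), (forall x, x \in A -> \rank (S x) = r) /\
    (forall x y, x \in A -> y \in A -> e x y -> S x *m (S y)^t* = 0).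
Proof.
move=> [S [rk o]].
exists (fun x => if insub x is Some y then S y else 0); split.
  by move=> x xA; rewrite insubT.
move=> x y xA yA exy; rewrite !insubT; apply/mx_orthE/o.
by rewrite /induced /=.
Qed.

Lemma xi_spec (T : finType) (e : rel T) r :
  (exists d, orth_subspace_rep C e d r) ->
  orth_subspace_rep C e (xi_r C e r) r /\
  forall d', orth_subspace_rep C e d' r -> (xi_r C e r <= d')%N.
Proof.
move=> ex; rewrite /xi_r.
apply: (@epsilon_spec nat (inhabits 0%N) (fun d => orth_subspace_rep C e d r /\
  forall d', orth_subspace_rep C e d' r -> (d <= d')%N)).
pose P := fun n => if excluded_middle_informative (orth_subspace_rep C e n r)
  then true else false.
have PP : forall n, P n <-> orth_subspace_rep C e n r.
  by move=> n; rewrite /P; case: excluded_middle_informative.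
have exP : exists n, P n by case: ex => n h; exists n; apply/PP.
exists (ex_minn exP); case: ex_minnP => m /PP Pm mmin; split => // d' hd'.
by apply: mmin; apply/PP.
Qed.


Lemma UU_orth m p d (U : 'M[C]_d) (A : 'M[C]_(m,d)) (B : 'M[C]_(p,d)) :
  U *m U^t* = 1%:M -> (A *m U) *m (B *m U)^t* = A *m B^t*.
Proof. by move=> h; rewrite adjM mulmxA -(mulmxA A) h mulmx1. Qed.

Lemma combine (T : finType) (e : rel T) (V1 V2 : {set T}) t d r :
  symmetric e -> clique_sum e V1 V2 t -> orth_subspace_rep C (induced e V1) d r ->
  orth_subspace_rep C (induced e V2) d r -> orth_subspace_rep C e d r.
Proof.
move=> sym [cov [_ [cl ed]]] /rep_ext [S1 [rk1 o1]] /rep_ext [S2 [rk2 o2]].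
have [U [UU hU]] : exists U : 'M[C]_d, U *m U^t* = 1%:M /\
    forall u, u \in V1 :&: V2 -> (S1 u <= S2 u *m U)%MS.
  apply: core.
  - by move=> u /setIP[uV1 _]; apply: rk1.
  - by move=> u /setIP[_ uV2]; apply: rk2.
  - move=> u v uK vK nuv; have /setIP[? _] := uK; have /setIP[? _] := vK.
    by apply: o1 => //; apply: cl.
  - move=> u v uK vK nuv; have /setIP[_ ?] := uK; have /setIP[_ ?] := vK.
    by apply: o2 => //; apply: cl.
have inV2 : forall x, x \notin V1 -> x \in V2.
  move=> x xn; have : x \in V1 :|: V2 by rewrite cov inE.
  by rewrite inE (negbTE xn).
exists (fun x => if x \in V1 then S1 x else S2 x *m U); split.
  move=> x; case: ifPn => xV1; first exact: rk1.
  apply/eqP; rewrite eqn_leq; apply/andP; split.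
    by apply: leq_trans (mxrankM_maxl _ _) _; rewrite rk2 // inV2.
  rewrite -{1}(rk2 x (inV2 x xV1)) -{1}[S2 x]mulmx1 -UU mulmxA.
  exact: mxrankM_maxl.
move=> x y exy; apply/mx_orthE.
have key : forall x y, x \in V1 :&: V2 -> y \notin V1 -> e x y ->
    S1 x *m (S2 y *m U)^t* = 0.
  move=> x' y' xK yn ex'y'; apply: (orth_sub (hU x' xK) (submx_refl _)).
  rewrite UU_orth //; apply: o2 => //; last exact: inV2.
  by case/setIP: xK.
case: ifPn => xV1; case: ifPn => yV1.
- exact: o1.
- apply: key => //; rewrite inE xV1 /=.
  by case/orP: (ed x y exy) => /andP[] // _ yV; rewrite yV in yV1.
- apply: orth_sym; apply: key => //; last by rewrite sym.
  rewrite inE yV1 /=.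
  by case/orP: (ed x y exy) => /andP[] // xV; rewrite xV in xV1.
- by rewrite UU_orth //; apply: o2 => //; apply: inV2.
Qed.

End G.

Theorem mainTheorem14 (C : numClosedFieldType) (T : finType) (e : rel T)
    (V1 V2 : {set T}) (t r : nat) :
  simple_graph e ->
  clique_sum e V1 V2 t ->
  xi_r C e r = maxn (xi_r C (induced e V1) r) (xi_r C (induced e V2) r).
Proof.
move=> [sym irr] cs.
have exG := rep_exists C r irr.
have [repG minG] := xi_spec exG.
have ex1 : exists d, orth_subspace_rep C (induced e V1) d r.
  by exists (xi_r C e r); apply: rep_induced.
have ex2 : exists d, orth_subspace_rep C (induced e V2) d r.
  by exists (xi_r C e r); apply: rep_induced.
have [rep1 min1] := xi_spec ex1.
have [rep2 min2] := xi_spec ex2.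
apply/eqP; rewrite eqn_leq; apply/andP; split.
  apply: minG; apply: (combine sym cs).
    by apply: (rep_pad rep1); rewrite leq_maxl.
  by apply: (rep_pad rep2); rewrite leq_maxr.
by rewrite geq_max min1 ?min2 //; apply: rep_induced.
Qed.
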